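(* Assume the standing setup below with $0<T_2<T_1<1$ and $\sum_m mQ(m)>0$. Then: (i) for every $q\in[0,1]$ with $\psi(q)\in(0,1)$ (where $\psi<1$), $\psi$ is differentiable at $q$ with $\frac{d\psi}{dq}>0$; and (ii) $\frac{d\tilde\nu}{dq}<0$ for all $q\in[0,1]$. Here $q=\frac{1}{\langle k\rangle}\sum_{k\ge1}k\phi(k)P(k)$ for a training profile $\phi:\{1,2,\dots\}\to[0,1]$, so in particular for fixed $T_2$ the outbreak constraint $1-\psi\le\gamma$ is equivalent to a lower bound on the linear functional $\frac{1}{\langle k\rangle}\sum_k k\phi(k)P(k)$.
   Context: Standing setup. $P$ is a probability distribution on $\{0,1,\dots,k_{\max}\}$ with mean $\langle k\rangle=\sum_k kP(k)>0$; $Q(k)=(k+1)P(k+1)/\langle k\rangle$ for $k\ge0$. Fix $T_1,T_2\in(0,1)$. For $q\in[0,1]$ set $P_q(k_1,k_2)=\binom{k_1+k_2}{k_2}q^{k_2}(1-q)^{k_1}P(k_1+k_2)$ and $Q_q(k_1,k_2)=\binom{k_1+k_2}{k_2}q^{k_2}(1-q)^{k_1}Q(k_1+k_2)$ (with $0^0=1$). Define $\tilde\nu(q)=T_1\sum_{k_1,k_2}k_1Q_q(k_1,k_2)+T_2\sum_{k_1,k_2}k_2Q_q(k_1,k_2)$. For $u\in[0,1]$ let $F_q(u)=\sum_{k_1,k_2}(1+(u-1)T_1)^{k_1}(1+(u-1)T_2)^{k_2}Q_q(k_1,k_2)$ and $G_q(u)=\sum_{k_1,k_2}(1+(u-1)T_1)^{k_1}(1+(u-1)T_2)^{k_2}P_q(k_1,k_2)$.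 Let $u^*(q)$ be the smallest solution in $[0,1]$ of $u=F_q(u)$ and $\psi(q)=G_q(u^*(q))$. *)

(* Defs.v *)
From Stdlib Require Import Reals ClassicalEpsilon.
Open Scope R_scope.

Definition is_degree_dist (P : nat -> R) (kmax : nat) : Prop :=
  (forall k, 0 <= P k) /\ (forall k, (kmax < k)%nat -> P k = 0) /\
  sum_f_R0 P kmax = 1.

Definition mean_deg (P : nat -> R) (kmax : nat) : R :=
  sum_f_R0 (fun k => INR k * P k) kmax.

Definition Qex (P : nat -> R) (kmax : nat) (k : nat) : R :=
  INR (k + 1) * P (k + 1)%nat / mean_deg P kmax.

(* double sum over 0 <= k1, k2 <= kmax (all other terms vanish) *)
Definition dsum (kmax : nat) (f : nat -> nat -> R) : R :=
  sum_f_R0 (fun k1 => sum_f_R0 (fun k2 => f k1 k2) kmax) kmax.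

(* P_q(k1,k2) and Q_q(k1,k2); note 0^0 = 1 for Stdlib pow *)
Definition Pq (P : nat -> R) (kmax : nat) (q : R) (k1 k2 : nat) : R :=
  C (k1 + k2) k2 * q ^ k2 * (1 - q) ^ k1 * P (k1 + k2)%nat.

Definition Qq (P : nat -> R) (kmax : nat) (q : R) (k1 k2 : nat) : R :=
  C (k1 + k2) k2 * q ^ k2 * (1 - q) ^ k1 * Qex P kmax (k1 + k2)%nat.

Definition nu_tilde (P : nat -> R) (kmax : nat) (T1 T2 q : R) : R :=
  T1 * dsum kmax (fun k1 k2 => INR k1 * Qq P kmax q k1 k2)
  + T2 * dsum kmax (fun k1 k2 => INR k2 * Qq P kmax q k1 k2).

Definition Fq (P : nat -> R) (kmax : nat) (T1 T2 q u : R) : R :=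
  dsum kmax (fun k1 k2 =>
    (1 + (u - 1) * T1) ^ k1 * (1 + (u - 1) * T2) ^ k2 * Qq P kmax q k1 k2).

Definition Gq (P : nat -> R) (kmax : nat) (T1 T2 q u : R) : R :=
  dsum kmax (fun k1 k2 =>
    (1 + (u - 1) * T1) ^ k1 * (1 + (u - 1) * T2) ^ k2 * Pq P kmax q k1 k2).

Definition is_ustar (P : nat -> R) (kmax : nat) (T1 T2 q u : R) : Prop :=
  0 <= u <= 1 /\ u = Fq P kmax T1 T2 q u /\
  (forall v, 0 <= v <= 1 -> v = Fq P kmax T1 T2 q v -> u <= v).

Definition ustar (P : nat -> R) (kmax : nat) (T1 T2 q : R) : R :=
  epsilon (inhabits 0) (is_ustar P kmax T1 T2 q).

Definition psi (P : nat -> R) (kmax : nat) (T1 T2 q : R) : R :=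
  Gq P kmax T1 T2 q (ustar P kmax T1 T2 q).

(* f : R -> R, considered on the domain [0,1], has derivative l at q
   (one-sided at the endpoints, two-sided in the interior). *)
Definition has_deriv01 (f : R -> R) (q l : R) : Prop :=
  forall eps, 0 < eps -> exists delta, 0 < delta /\
    forall h, h <> 0 -> Rabs h < delta -> 0 <= q + h <= 1 ->
      Rabs ((f (q + h) - f q) / h - l) < eps.

(* Main.v *)
Require Import Defs.
From Stdlib Require Import Reals ClassicalEpsilon Classical Lra Lia.
Open Scope R_scope.

Lemma sum_trunc (f : nat -> R) (M N : nat) :
  (M <= N)%nat -> (forall i, (M < i)%nat -> f i = 0) ->
  sum_f_R0 f N = sum_f_R0 f M.
Proof.
  intros HMN Hz. induction N as [|N IH].
  - assert (M = 0%nat) by lia. subst. reflexivity.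
  - destruct (Nat.eq_dec M (S N)) as [->|Hne]; [reflexivity|].
    simpl. rewrite IH by lia. rewrite (Hz (S N)) by lia. ring.
Qed.

Lemma tri_diag (g : nat -> nat -> R) (N : nat) :
  sum_f_R0 (fun k1 => sum_f_R0 (fun k2 => g k1 k2) (N - k1)) N =
  sum_f_R0 (fun m => sum_f_R0 (fun i => g i (m - i)%nat) m) N.
Proof.
  induction N as [|N IH].
  - simpl. reflexivity.
  - rewrite (tech5 (fun m => sum_f_R0 (fun i => g i (m - i)%nat) m)).
    rewrite <- IH.
    rewrite (tech5 (fun k1 => sum_f_R0 (fun k2 => g k1 k2) (S N - k1))).
    rewrite (tech5 (fun i => g i (S N - i)%nat)).
    replace (S N - S N)%nat with 0%nat by lia.
    rewrite (sum_eq (fun k1 => sum_f_R0 (fun k2 => g k1 k2) (S N - k1))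
      (fun k1 => sum_f_R0 (fun k2 => g k1 k2) (N - k1) + g k1 (S N - k1)%nat)).
    + rewrite sum_plus. simpl. ring.
    + intros i Hi. replace (S N - i)%nat with (S (N - i)) by lia. simpl. reflexivity.
Qed.

Lemma dsum_diag (g : nat -> nat -> R) (N : nat) :
  (forall k1 k2, (N < k1 + k2)%nat -> g k1 k2 = 0) ->
  dsum N g = sum_f_R0 (fun m => sum_f_R0 (fun i => g i (m - i)%nat) m) N.
Proof.
  intros Hz. unfold dsum. rewrite <- tri_diag. apply sum_eq. intros k1 Hk1.
  apply sum_trunc; [lia|]. intros i Hi. apply Hz. lia.
Qed.

Lemma C_S (n i : nat) : (i <= n)%nat -> INR (S i) * C (S n) (S i) = INR (S n) * C n i.
Proof.
  intros H. unfold C. replace (S n - S i)%nat with (n - i)%nat by lia.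
  rewrite !fact_simpl, !mult_INR.
  assert (H1 := INR_fact_neq_0 n). assert (H2 := INR_fact_neq_0 i).
  assert (H3 := INR_fact_neq_0 (n - i)).
  assert (H4 : INR (S i) <> 0) by (apply not_0_INR; lia).
  field. repeat split; auto.
Qed.

Lemma wbinom (x y : R) (m : nat) :
  sum_f_R0 (fun i => INR i * C m i * x ^ i * y ^ (m - i)) m = INR m * x * (x + y) ^ (pred m).
Proof.
  destruct m as [|n].
  - simpl. ring.
  - rewrite decomp_sum by lia. simpl pred. rewrite binomial.
    rewrite scal_sum. simpl INR at 1. rewrite Rmult_0_l, !Rmult_0_l, Rplus_0_l.
    apply sum_eq. intros i Hi.
    replace (S n - S i)%nat with (n - i)%nat by lia.
    assert (HH := C_S n i Hi). simpl pow. rewrite HH. ring.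
Qed.


Lemma diag_binom (c : nat -> R) (a b q : R) (N : nat) :
  (forall m, (N < m)%nat -> c m = 0) ->
  dsum N (fun k1 k2 => a ^ k1 * b ^ k2 * (C (k1 + k2) k2 * q ^ k2 * (1 - q) ^ k1 * c (k1 + k2)%nat))
  = sum_f_R0 (fun m => c m * ((1 - q) * a + q * b) ^ m) N.
Proof.
  intros Hc. rewrite dsum_diag.
  - apply sum_eq. intros m Hm. rewrite binomial, scal_sum. apply sum_eq. intros i Hi.
    replace (i + (m - i))%nat with m by lia. rewrite <- pascal_step1 by lia.
    rewrite !Rpow_mult_distr. ring.
  - intros k1 k2 H. rewrite Hc by lia. ring.
Qed.

Lemma diag_w1 (c : nat -> R) (q : R) (N : nat) :
  (forall m, (N < m)%nat -> c m = 0) ->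
  dsum N (fun k1 k2 => INR k1 * (C (k1 + k2) k2 * q ^ k2 * (1 - q) ^ k1 * c (k1 + k2)%nat))
  = (1 - q) * sum_f_R0 (fun m => INR m * c m) N.
Proof.
  intros Hc. rewrite dsum_diag.
  - rewrite scal_sum. apply sum_eq. intros m Hm.
    transitivity (c m * sum_f_R0 (fun i => INR i * C m i * (1 - q) ^ i * q ^ (m - i)) m).
    + rewrite scal_sum. apply sum_eq. intros i Hi.
      replace (i + (m - i))%nat with m by lia. rewrite <- pascal_step1 by lia. ring.
    + rewrite wbinom. replace (1 - q + q) with 1 by ring. rewrite pow1. ring.
  - intros k1 k2 H. rewrite Hc by lia. ring.
Qed.

Lemma diag_w2 (c : nat -> R) (q : R) (N : nat) :
  (forall m, (N < m)%nat -> c m = 0) ->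
  dsum N (fun k1 k2 => INR k2 * (C (k1 + k2) k2 * q ^ k2 * (1 - q) ^ k1 * c (k1 + k2)%nat))
  = q * sum_f_R0 (fun m => INR m * c m) N.
Proof.
  intros Hc. rewrite dsum_diag.
  - rewrite scal_sum. apply sum_eq. intros m Hm.
    transitivity (c m * (INR m * sum_f_R0 (fun i => C m i * (1 - q) ^ i * q ^ (m - i)) m
       - sum_f_R0 (fun i => INR i * C m i * (1 - q) ^ i * q ^ (m - i)) m)).
    + rewrite (scal_sum _ m (INR m)), <- minus_sum, scal_sum. apply sum_eq. intros i Hi.
      replace (i + (m - i))%nat with m by lia. rewrite <- pascal_step1 by lia.
      rewrite minus_INR by lia. ring.
    + rewrite wbinom, <- binomial. replace (1 - q + q) with 1 by ring. rewrite !pow1. ring.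
  - intros k1 k2 H. rewrite Hc by lia. ring.
Qed.


Definition g0 (P : nat -> R) kmax x := sum_f_R0 (fun m => P m * x ^ m) kmax.
Definition g1 (P : nat -> R) kmax x := sum_f_R0 (fun m => Qex P kmax m * x ^ m) kmax.
Definition Tq (T1 T2 q : R) := T1 + (T2 - T1) * q.
Fixpoint Sf (m : nat) (x : R) : R := match m with O => 0 | S m' => Sf m' x + x ^ m' end.
Fixpoint Sd (m : nat) (x : R) : R := match m with O => 0 | S m' => Sd m' x + INR m' * x ^ pred m' end.
Definition K (P : nat -> R) kmax x := sum_f_R0 (fun m => Qex P kmax m * Sf m x) kmax.
Definition Kd (P : nat -> R) kmax x := sum_f_R0 (fun m => Qex P kmax m * Sd m x) kmax.
Definition g0d (P : nat -> R) kmax x := sum_f_R0 (fun m => P m * (INR m * x ^ pred m)) kmax.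

Lemma Qex_zero P kmax m : is_degree_dist P kmax -> (kmax < m)%nat -> Qex P kmax m = 0.
Proof. intros [_ [H _]] Hm. unfold Qex. rewrite H by lia. unfold Rdiv. ring. Qed.

Lemma Qex_nonneg P kmax m : is_degree_dist P kmax -> 0 < mean_deg P kmax -> 0 <= Qex P kmax m.
Proof.
  intros [H _] Hm. unfold Qex. apply Rmult_le_pos; [apply Rmult_le_pos|].
  apply pos_INR. apply H. left. apply Rinv_0_lt_compat. exact Hm.
Qed.

Lemma sumQ P kmax : is_degree_dist P kmax -> 0 < mean_deg P kmax ->
  sum_f_R0 (Qex P kmax) kmax = 1.
Proof.
  intros HP Hm. destruct HP as [H0 [Hz Hs]].
  unfold Qex. unfold Rdiv. rewrite <- (sum_eq (fun k => INR (S k) * P (S k) * / mean_deg P kmax)).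
  2:{ intros i _. rewrite Nat.add_1_r. reflexivity. }
  rewrite <- (scal_sum (fun k => INR (S k) * P (S k)) kmax (/ mean_deg P kmax)) .
  replace (sum_f_R0 (fun k => INR (S k) * P (S k)) kmax) with (mean_deg P kmax).
  - field. lra.
  - unfold mean_deg. 
    assert (E := decomp_sum (fun k => INR k * P k) (S kmax) ltac:(lia)).
    simpl pred in E. simpl in E |- *.
    rewrite Hz in E by lia. simpl in E. lra.
Qed.

Lemma Fq_eq P kmax T1 T2 q u : is_degree_dist P kmax ->
  Fq P kmax T1 T2 q u = g1 P kmax (1 + (u - 1) * Tq T1 T2 q).
Proof.
  intros HP. unfold Fq, Qq, g1.
  rewrite (diag_binom (Qex P kmax)). 2:{ intros m Hm; apply Qex_zero; auto. }
  apply sum_eq. intros m _. f_equal. f_equal. unfold Tq. ring.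
Qed.

Lemma Gq_eq P kmax T1 T2 q u : is_degree_dist P kmax ->
  Gq P kmax T1 T2 q u = g0 P kmax (1 + (u - 1) * Tq T1 T2 q).
Proof.
  intros HP. unfold Gq, Pq, g0.
  rewrite (diag_binom P). 2:{ intros m Hm; destruct HP as [_ [H _]]; apply H; auto. }
  apply sum_eq. intros m _. f_equal. f_equal. unfold Tq. ring.
Qed.

Lemma nu_eq P kmax T1 T2 q : is_degree_dist P kmax ->
  nu_tilde P kmax T1 T2 q = Tq T1 T2 q * sum_f_R0 (fun m => INR m * Qex P kmax m) kmax.
Proof.
  intros HP. unfold nu_tilde, Qq.
  rewrite (diag_w1 (Qex P kmax)). 2:{ intros m Hm; apply Qex_zero; auto. }
  rewrite (diag_w2 (Qex P kmax)). 2:{ intros m Hm; apply Qex_zero; auto. }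
  unfold Tq. ring.
Qed.

Lemma Sf_eq m x : 1 - x ^ m = (1 - x) * Sf m x.
Proof. induction m; simpl; [ring|]. simpl in IHm. nra. Qed.

Lemma one_minus_g1 P kmax x : is_degree_dist P kmax -> 0 < mean_deg P kmax ->
  1 - g1 P kmax x = (1 - x) * K P kmax x.
Proof.
  intros HP Hm. unfold g1, K. rewrite <- (sumQ P kmax HP Hm) at 1.
  rewrite <- minus_sum, scal_sum. apply sum_eq. intros i _.
  transitivity (Qex P kmax i * (1 - x ^ i)); [ring|]. rewrite Sf_eq. ring.
Qed.

Lemma g0_1 P kmax : is_degree_dist P kmax -> g0 P kmax 1 = 1.
Proof.
  intros [_ [_ H]]. unfold g0. transitivity (sum_f_R0 P kmax); [|exact H]. apply sum_eq. intros. rewrite pow1. ring.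
Qed.

Lemma g1_nonneg P kmax x : is_degree_dist P kmax -> 0 < mean_deg P kmax -> 0 <= x ->
  0 <= g1 P kmax x.
Proof.
  intros HP Hm Hx. unfold g1. apply cond_pos_sum. intros n.
  apply Rmult_le_pos. apply Qex_nonneg; auto. apply pow_le; auto.
Qed.

Lemma Sf_nonneg m x : 0 <= x -> 0 <= Sf m x.
Proof. intros Hx; induction m; simpl; [lra|]. assert (0 <= x ^ m) by (apply pow_le; auto). lra. Qed.

Lemma Sd_nonneg m x : 0 <= x -> 0 <= Sd m x.
Proof. intros Hx; induction m; simpl; [lra|].
  assert (0 <= x ^ pred m) by (apply pow_le; auto). assert (0 <= INR m) by apply pos_INR. nra. Qed.

Lemma Sd_ge1 m x : 0 <= x -> (2 <= m)%nat -> 1 <= Sd m x.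
Proof.
  intros Hx Hm. induction Hm.
  - simpl. lra.
  - simpl. assert (0 <= x ^ pred m) by (apply pow_le; auto). assert (0 <= INR m) by apply pos_INR. nra.
Qed.

Lemma Sf_le1 m x : (m <= 1)%nat -> Sf m x <= 1.
Proof. intros H. destruct m as [|[|m]]; simpl; try lra. lia. Qed.

Lemma Sf_der m x : derivable_pt_lim (Sf m) x (Sd m x).
Proof.
  induction m; simpl.
  - apply (derivable_pt_lim_const 0 x).
  - apply (derivable_pt_lim_plus (Sf m) (fun y => y ^ m)); auto. apply derivable_pt_lim_pow.
Qed.

Lemma sum_der (f : nat -> R -> R) (f' : nat -> R -> R) N x :
  (forall m, derivable_pt_lim (f m) x (f' m x)) ->
  derivable_pt_lim (fun y => sum_f_R0 (fun m => f m y) N) x (sum_f_R0 (fun m => f' m x) N).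
Proof.
  intros H. induction N; simpl.
  - apply H.
  - apply (derivable_pt_lim_plus (fun y => sum_f_R0 (fun m => f m y) N) (f (S N))); auto.
Qed.

Lemma K_der P kmax x : derivable_pt_lim (K P kmax) x (Kd P kmax x).
Proof.
  unfold K, Kd. apply (sum_der (fun m y => Qex P kmax m * Sf m y) (fun m y => Qex P kmax m * Sd m y)).
  intros m. apply (derivable_pt_lim_scal (Sf m)). apply Sf_der.
Qed.

Lemma g0_der P kmax x : derivable_pt_lim (g0 P kmax) x (g0d P kmax x).
Proof.
  unfold g0, g0d. apply (sum_der (fun m y => P m * y ^ m) (fun m y => P m * (INR m * y ^ pred m))).
  intros m. apply (derivable_pt_lim_scal (fun y => y ^ m)). apply derivable_pt_lim_pow.
Qed.


Lemma cont_sum (f : nat -> R -> R) N x :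
  (forall m, continuity_pt (f m) x) ->
  continuity_pt (fun y => sum_f_R0 (fun m => f m y) N) x.
Proof.
  intros H. induction N; simpl.
  - apply H.
  - apply (continuity_pt_plus (fun y => sum_f_R0 (fun m => f m y) N) (f (S N))); auto.
Qed.

Lemma cont_of_der f x l : derivable_pt_lim f x l -> continuity_pt f x.
Proof. intros H. apply derivable_continuous_pt. exists l. exact H. Qed.

Lemma cont_cpow c n x : continuity_pt (fun y => c * y ^ n) x.
Proof.
  apply (cont_of_der _ _ (c * (INR n * x ^ pred n))).
  apply (derivable_pt_lim_scal (fun y => y ^ n)). apply derivable_pt_lim_pow.
Qed.

Lemma Sd_cont m x : continuity_pt (Sd m) x.
Proof.
  induction m; simpl.
  - apply (continuity_pt_const (fun _ => 0)). intros a b; reflexivity.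
  - apply (continuity_pt_plus (Sd m) (fun y => INR m * y ^ pred m)); auto. apply cont_cpow.
Qed.

Lemma Kd_cont P kmax x : continuity_pt (Kd P kmax) x.
Proof.
  unfold Kd. apply (cont_sum (fun m y => Qex P kmax m * Sd m y)). intros m.
  apply (continuity_pt_scal (Sd m)). apply Sd_cont.
Qed.

Lemma g0d_cont P kmax x : continuity_pt (g0d P kmax) x.
Proof.
  unfold g0d. apply (cont_sum (fun m y => P m * (INR m * y ^ pred m))). intros m.
  apply (continuity_pt_scal (fun y => INR m * y ^ pred m)). apply cont_cpow.
Qed.

Lemma K_cont P kmax : continuity (K P kmax).
Proof. intros x. apply (cont_of_der _ _ _ (K_der P kmax x)). Qed.

Lemma mvt_any f f' a b : (forall c, derivable_pt_lim f c (f' c)) ->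
  exists c, ((a <= c <= b) \/ (b <= c <= a)) /\ f b - f a = f' c * (b - a).
Proof.
  intros H. destruct (Rtotal_order a b) as [Hab|[Hab|Hab]].
  - destruct (MVT_cor2 f f' a b Hab (fun c _ => H c)) as [c [E Hc]].
    exists c. split; [left; lra|exact E].
  - subst. exists b. split; [left; lra|ring].
  - destruct (MVT_cor2 f f' b a Hab (fun c _ => H c)) as [c [E Hc]].
    exists c. split; [right; lra|]. lra.
Qed.

Lemma cont_eps f x0 : continuity_pt f x0 -> forall eps, 0 < eps ->
  exists d, 0 < d /\ forall x, Rabs (x - x0) < d -> Rabs (f x - f x0) < eps.
Proof.
  intros H eps He. destruct (H eps He) as [d [Hd Hx]]. exists d. split; auto.
  intros x Hxd. destruct (Req_dec x x0) as [->|Hne].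
  - unfold Rminus. rewrite Rplus_opp_r, Rabs_R0. auto.
  - apply (Hx x). split. split; [exact I| auto]. exact Hxd.
Qed.

Lemma mult_close x0 y0 eps : 0 < eps ->
  exists e1 e2, 0 < e1 /\ 0 < e2 /\ forall x y, Rabs (x - x0) < e1 -> Rabs (y - y0) < e2 ->
    Rabs (x * y - x0 * y0) < eps.
Proof.
  intros He. set (A := Rabs x0 + 1). set (B := Rabs y0 + 1).
  assert (HA : 0 < A) by (unfold A; pose proof (Rabs_pos x0); lra).
  assert (HB : 0 < B) by (unfold B; pose proof (Rabs_pos y0); lra).
  exists (eps / (2 * B)), (Rmin 1 (eps / (2 * A))). repeat split.
  - apply Rdiv_lt_0_compat; lra.
  - apply Rmin_pos; [lra|]. apply Rdiv_lt_0_compat; lra.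
  - intros x y Hx Hy.
    assert (Hy1 : Rabs (y - y0) < 1) by (eapply Rlt_le_trans; [exact Hy| apply Rmin_l]).
    assert (Hy2 : Rabs (y - y0) < eps / (2 * A)) by (eapply Rlt_le_trans; [exact Hy| apply Rmin_r]).
    replace (x * y - x0 * y0) with ((x - x0) * y + x0 * (y - y0)) by ring.
    eapply Rle_lt_trans; [apply Rabs_triang|]. rewrite !Rabs_mult.
    assert (Hyb : Rabs y <= B).
    { unfold B. replace y with ((y - y0) + y0) by ring.
      eapply Rle_trans; [apply Rabs_triang|]. lra. }
    assert (E1 : Rabs (x - x0) * Rabs y <= eps / (2 * B) * B).
    { apply Rmult_le_compat; try apply Rabs_pos; lra. }
    assert (E2 : Rabs x0 * Rabs (y - y0) <= A * (eps / (2 * A))).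
    { apply Rmult_le_compat; try apply Rabs_pos; [unfold A; lra | lra]. }
    replace (eps / (2 * B) * B) with (eps / 2) in E1 by (field; lra).
    replace (A * (eps / (2 * A))) with (eps / 2) in E2 by (field; lra).
    assert (Rabs (x - x0) * Rabs y < eps / 2 \/ Rabs x0 * Rabs (y - y0) < eps / 2).
    { destruct (Req_dec (Rabs y) 0) as [Z|Z].
      - left. rewrite Z. lra.
      - left. assert (0 < Rabs y) by (pose proof (Rabs_pos y); lra).
        apply Rlt_le_trans with (eps / (2 * B) * Rabs y).
        + apply Rmult_lt_compat_r; auto.
        + replace (eps / 2) with (eps / (2 * B) * B) by (field; lra).
          apply Rmult_le_compat_l; auto. left; apply Rdiv_lt_0_compat; lra. }
    lra.
Qed.


Lemma sum_nonneg_b (f : nat -> R) N : (forall n, (n <= N)%nat -> 0 <= f n) -> 0 <= sum_f_R0 f N.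
Proof.
  intros H. induction N; simpl. apply H; lia.
  assert (0 <= f (S N)) by (apply H; lia). assert (0 <= sum_f_R0 f N) by (apply IHN; intros; apply H; lia). lra.
Qed.

Lemma sum_ge_term (f : nat -> R) N i : (forall n, (n <= N)%nat -> 0 <= f n) -> (i <= N)%nat ->
  f i <= sum_f_R0 f N.
Proof.
  intros H Hi. induction N.
  - assert (i = 0%nat) by lia. subst. simpl. lra.
  - destruct (Nat.eq_dec i (S N)) as [->|Hne].
    + simpl. assert (0 <= sum_f_R0 f N) by (apply sum_nonneg_b; intros; apply H; lia). lra.
    + simpl. assert (f i <= sum_f_R0 f N) by (apply IHN; [intros; apply H; lia| lia]).
      assert (0 <= f (S N)) by (apply H; lia). lra.
Qed.

Lemma exists_m2 P kmax T x : is_degree_dist P kmax -> 0 < mean_deg P kmax ->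
  0 < T < 1 -> 0 <= x -> T * K P kmax x = 1 ->
  exists m0, (2 <= m0)%nat /\ (m0 <= kmax)%nat /\ 0 < Qex P kmax m0.
Proof.
  intros HP Hm HT Hx HK. apply NNPP. intros Hn.
  assert (HK1 : K P kmax x <= 1).
  { unfold K. rewrite <- (sumQ P kmax HP Hm). apply sum_Rle. intros n Hn'.
    assert (Q0 := Qex_nonneg P kmax n HP Hm).
    destruct (Compare_dec.le_lt_dec n 1) as [Hle|Hlt].
    - assert (Sf n x <= 1) by (apply Sf_le1; auto).
      assert (0 <= Sf n x) by (apply Sf_nonneg; auto). nra.
    - assert (Qex P kmax n <= 0).
      { apply Rnot_lt_le. intros Hq. apply Hn. exists n. repeat split; auto; lia. }
      assert (Qex P kmax n = 0) by lra. rewrite H0. lra. }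
  nra.
Qed.

Lemma Kd_lb P kmax m0 z : is_degree_dist P kmax -> 0 < mean_deg P kmax ->
  (2 <= m0)%nat -> (m0 <= kmax)%nat -> 0 <= z -> Qex P kmax m0 <= Kd P kmax z.
Proof.
  intros HP Hm H2 Hk Hz. unfold Kd.
  apply Rle_trans with (Qex P kmax m0 * Sd m0 z).
  - assert (1 <= Sd m0 z) by (apply Sd_ge1; auto).
    assert (0 <= Qex P kmax m0) by (apply Qex_nonneg; auto). nra.
  - apply (sum_ge_term (fun m => Qex P kmax m * Sd m z)); auto.
    intros n _. apply Rmult_le_pos; [apply Qex_nonneg; auto| apply Sd_nonneg; auto].
Qed.

Lemma K_incr P kmax m0 a b : is_degree_dist P kmax -> 0 < mean_deg P kmax ->
  (2 <= m0)%nat -> (m0 <= kmax)%nat -> 0 <= a -> a <= b ->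
  Qex P kmax m0 * (b - a) <= K P kmax b - K P kmax a.
Proof.
  intros HP Hm H2 Hk Ha Hab.
  destruct (mvt_any (K P kmax) (Kd P kmax) a b (K_der P kmax)) as [c [Hc E]].
  rewrite E. assert (Qex P kmax m0 <= Kd P kmax c) by (apply Kd_lb with (m0 := m0); auto; lra).
  apply Rmult_le_compat_r; lra.
Qed.

Lemma ustar_unique P kmax T1 T2 q u0 : is_ustar P kmax T1 T2 q u0 -> ustar P kmax T1 T2 q = u0.
Proof.
  intros H. assert (H' : is_ustar P kmax T1 T2 q (ustar P kmax T1 T2 q)).
  { unfold ustar. apply epsilon_spec. exists u0. exact H. }
  destruct H as [Hr [Hf Hmin]]. destruct H' as [Hr' [Hf' Hmin']].
  apply Rle_antisym; [apply Hmin'|apply Hmin]; auto.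
Qed.

Lemma fixed_root P kmax T1 T2 q v : is_degree_dist P kmax -> 0 < mean_deg P kmax ->
  0 < Tq T1 T2 q < 1 -> 0 <= v < 1 -> v = Fq P kmax T1 T2 q v ->
  0 <= 1 + (v - 1) * Tq T1 T2 q < 1 /\ Tq T1 T2 q * K P kmax (1 + (v - 1) * Tq T1 T2 q) = 1.
Proof.
  intros HP Hm HT Hv Hf. set (T := Tq T1 T2 q) in *. split; [nra|].
  rewrite Fq_eq in Hf by auto. fold T in Hf.
  assert (E := one_minus_g1 P kmax (1 + (v - 1) * T) HP Hm).
  rewrite <- Hf in E. replace (1 - (1 + (v - 1) * T)) with ((1 - v) * T) in E by ring.
  apply (Rmult_eq_reg_l (1 - v)); [|lra]. lra.
Qed.

Lemma psi_noroot P kmax T1 T2 q : is_degree_dist P kmax -> 0 < mean_deg P kmax ->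
  0 < Tq T1 T2 q < 1 ->
  (forall x, 0 <= x < 1 -> Tq T1 T2 q * K P kmax x <> 1) -> psi P kmax T1 T2 q = 1.
Proof.
  intros HP Hm HT Hn. unfold psi. rewrite (ustar_unique P kmax T1 T2 q 1).
  - rewrite Gq_eq by auto. replace (1 + (1 - 1) * Tq T1 T2 q) with 1 by ring. apply g0_1; auto.
  - split; [lra|split].
    + rewrite Fq_eq by auto. replace (1 + (1 - 1) * Tq T1 T2 q) with 1 by ring.
      assert (E := one_minus_g1 P kmax 1 HP Hm). lra.
    + intros v Hv Hf. destruct (Req_dec v 1) as [->|Hne]; [lra|].
      exfalso. destruct (fixed_root P kmax T1 T2 q v HP Hm HT ltac:(lra) Hf) as [H1 H2].
      apply (Hn _ H1 H2).
Qed.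

Lemma psi_root P kmax T1 T2 q x : is_degree_dist P kmax -> 0 < mean_deg P kmax ->
  0 < Tq T1 T2 q < 1 -> 0 <= x < 1 -> Tq T1 T2 q * K P kmax x = 1 ->
  psi P kmax T1 T2 q = g0 P kmax x.
Proof.
  intros HP Hm HT Hx HK. set (T := Tq T1 T2 q) in *.
  destruct (exists_m2 P kmax T x HP Hm HT ltac:(lra) HK) as [m0 [Hm2 [Hmk HQ]]].
  set (u0 := 1 - (1 - x) / T).
  assert (Hux : 1 + (u0 - 1) * T = x) by (unfold u0; field; lra).
  assert (HKx : K P kmax x = / T) by (field_simplify_eq; lra).
  assert (Hg1 : g1 P kmax x = u0).
  { assert (E := one_minus_g1 P kmax x HP Hm). rewrite HKx in E. unfold u0.
    replace ((1 - x) / T) with ((1 - x) * / T) by (unfold Rdiv; ring). lra. }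
  unfold psi. rewrite (ustar_unique P kmax T1 T2 q u0).
  - rewrite Gq_eq by auto. fold T. rewrite Hux. reflexivity.
  - assert (Hg0 := g1_nonneg P kmax x HP Hm ltac:(lra)).
    assert (Hd : 0 <= (1 - x) / T) by (unfold Rdiv; apply Rmult_le_pos; [lra| left; apply Rinv_0_lt_compat; lra]).
    split; [unfold u0 in *; lra|split].
    + rewrite Fq_eq by auto. fold T. rewrite Hux. auto.
    + intros v Hv Hf. destruct (Req_dec v 1) as [->|Hne]; [unfold u0; lra|].
      destruct (fixed_root P kmax T1 T2 q v HP Hm HT ltac:(lra) Hf) as [H1 H2].
      fold T in H1, H2. set (z := 1 + (v - 1) * T) in *.
      assert (Hz : z = x).
      { assert (EK : K P kmax z = K P kmax x) by (apply (Rmult_eq_reg_l T); lra).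
        destruct (Rtotal_order z x) as [Hl|[Heq|Hl]]; auto; exfalso.
        - assert (I := K_incr P kmax m0 z x HP Hm Hm2 Hmk ltac:(lra) ltac:(lra)). nra.
        - assert (I := K_incr P kmax m0 x z HP Hm Hm2 Hmk ltac:(lra) ltac:(lra)). nra. }
      assert (v = u0).
      { unfold u0. rewrite <- Hz. unfold z. field. lra. }
      lra.
Qed.


Lemma Tq_bounds T1 T2 q : 0 < T2 < T1 -> 0 <= q <= 1 -> T2 <= Tq T1 T2 q <= T1.
Proof. intros. unfold Tq. nra. Qed.

Lemma invT_close T1 T2 q0 h : 0 < T2 < T1 -> 0 <= q0 <= 1 -> 0 <= q0 + h <= 1 ->
  Rabs (/ Tq T1 T2 (q0 + h) - / Tq T1 T2 q0) <= (T1 - T2) * Rabs h / (Tq T1 T2 q0 * T2).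
Proof.
  intros HT Hq Hqh. assert (Ha := Tq_bounds T1 T2 q0 HT Hq). assert (Hb := Tq_bounds T1 T2 _ HT Hqh).
  set (a := Tq T1 T2 q0) in *. set (b := Tq T1 T2 (q0 + h)) in *.
  assert (Eab : a - b = (T1 - T2) * h) by (unfold a, b, Tq; ring).
  replace (/ b - / a) with ((T1 - T2) * h * / (a * b)) by (rewrite <- Eab; field; lra).
  rewrite !Rabs_mult, (Rabs_right (T1 - T2)) by lra.
  rewrite (Rabs_right (/ (a * b))) by (left; apply Rinv_0_lt_compat; nra).
  unfold Rdiv. apply Rmult_le_compat_l.
  - apply Rmult_le_pos; [lra| apply Rabs_pos].
  - apply Rinv_le_contravar; nra.
Qed.

Lemma g0d_pos P kmax x : is_degree_dist P kmax -> 0 < mean_deg P kmax -> 0 < x -> 0 < g0d P kmax x.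
Proof.
  intros HP Hm Hx. destruct HP as [H0 [Hz Hs]].
  assert (Ex : exists m1, (1 <= m1)%nat /\ (m1 <= kmax)%nat /\ 0 < P m1).
  { apply NNPP. intros Hn. assert (mean_deg P kmax <= 0); [|lra].
    unfold mean_deg. replace 0 with (sum_f_R0 (fun _ => 0) kmax) by (rewrite sum_cte; ring).
    apply sum_Rle. intros n Hn'.
    destruct n as [|n]. simpl. lra.
    assert (P (S n) <= 0). { apply Rnot_lt_le. intros Hp. apply Hn. exists (S n). repeat split; auto; lia. }
    assert (0 <= INR (S n)) by apply pos_INR. nra. }
  destruct Ex as [m1 [H1 [H2 H3]]].
  unfold g0d. apply Rlt_le_trans with (P m1 * (INR m1 * x ^ pred m1)).
  - apply Rmult_lt_0_compat; auto. apply Rmult_lt_0_compat. apply lt_0_INR; lia. apply pow_lt; auto.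
  - apply (sum_ge_term (fun m => P m * (INR m * x ^ pred m))); auto. intros n _.
    apply Rmult_le_pos; auto. apply Rmult_le_pos. apply pos_INR. apply pow_le; lra.
Qed.

Lemma root_cont P kmax T1 T2 q0 x0 m0 e : is_degree_dist P kmax -> 0 < mean_deg P kmax ->
  0 < T2 < T1 -> T1 < 1 -> 0 <= q0 <= 1 -> (2 <= m0)%nat -> (m0 <= kmax)%nat -> 0 < Qex P kmax m0 ->
  0 < e -> 0 <= x0 - e -> Tq T1 T2 q0 * K P kmax x0 = 1 ->
  forall h, 0 <= q0 + h <= 1 -> Rabs h < Qex P kmax m0 * e * Tq T1 T2 q0 * T2 / (T1 - T2) ->
  exists z, x0 - e <= z <= x0 + e /\ Tq T1 T2 (q0 + h) * K P kmax z = 1.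
Proof.
  intros HP Hm HT HT1 Hq H2 Hk HQ He Hxe HK h Hqh Hh.
  assert (Ha := Tq_bounds T1 T2 q0 HT Hq). assert (Hb := Tq_bounds T1 T2 _ HT Hqh).
  set (a := Tq T1 T2 q0) in *. set (b := Tq T1 T2 (q0 + h)) in *.
  set (c := Qex P kmax m0) in *.
  assert (Hc := invT_close T1 T2 q0 h HT Hq Hqh). fold a b in Hc.
  assert (Hcl : (T1 - T2) * Rabs h / (a * T2) < c * e).
  { apply Rmult_lt_reg_r with (a * T2 / (T1 - T2)).
    - apply Rdiv_lt_0_compat; nra.
    - replace ((T1 - T2) * Rabs h / (a * T2) * (a * T2 / (T1 - T2))) with (Rabs h) by (field; nra).
      replace (c * e * (a * T2 / (T1 - T2))) with (c * e * a * T2 / (T1 - T2)) by (field; nra). exact Hh. }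
  assert (Hd : Rabs (/ b - / a) < c * e) by lra.
  apply Rabs_def2 in Hd.
  assert (HKx : K P kmax x0 = / a) by (field_simplify_eq; lra).
  assert (I1 := K_incr P kmax m0 (x0 - e) x0 HP Hm H2 Hk Hxe ltac:(lra)).
  assert (I2 := K_incr P kmax m0 x0 (x0 + e) HP Hm H2 Hk ltac:(lra) ltac:(lra)). fold c in I1, I2.
  assert (Hf : continuity (K P kmax - fct_cte (/ b))%F).
  { intros x. apply continuity_pt_minus. apply K_cont. apply continuity_pt_const. intros u v; reflexivity. }
  destruct (IVT _ (x0 - e) (x0 + e) Hf ltac:(lra)) as [z [Hz Ez]].
  - unfold minus_fct, fct_cte. lra.
  - unfold minus_fct, fct_cte. lra.
  - exists z. split; auto. unfold minus_fct, fct_cte in Ez.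
    assert (K P kmax z = / b) by lra. rewrite H. field. lra.
Qed.

Lemma part1 P kmax T1 T2 q0 : is_degree_dist P kmax -> 0 < mean_deg P kmax ->
  0 < T2 -> T2 < T1 -> T1 < 1 -> 0 <= q0 <= 1 -> psi P kmax T1 T2 q0 < 1 ->
  exists l, has_deriv01 (psi P kmax T1 T2) q0 l /\ 0 < l.
Proof.
  intros HP Hm HT2 HT12 HT1 Hq Hpsi.
  assert (HT : 0 < T2 < T1) by lra.
  assert (Ha := Tq_bounds T1 T2 q0 HT Hq). set (T0 := Tq T1 T2 q0) in *.
  destruct (classic (exists x, 0 <= x < 1 /\ T0 * K P kmax x = 1)) as [[x0 [Hx0 HK0]]|Hno].
  2:{ exfalso. rewrite psi_noroot in Hpsi; auto; [lra|fold T0; lra|].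
      intros x Hx E. apply Hno. exists x; auto. }
  destruct (exists_m2 P kmax T0 x0 HP Hm ltac:(lra) ltac:(lra) HK0) as [m0 [Hm2 [Hmk HQ]]].
  set (c0 := Qex P kmax m0) in *.
  assert (HKx : K P kmax x0 = / T0) by (field_simplify_eq; lra).
  assert (Hx0p : 0 < x0).
  { assert (E := one_minus_g1 P kmax x0 HP Hm). assert (G := g1_nonneg P kmax x0 HP Hm ltac:(lra)).
    assert ((1 - x0) * K P kmax x0 <= 1) by lra. assert (1 - x0 <= T0) by nra. lra. }
  assert (Hpsi0 : psi P kmax T1 T2 q0 = g0 P kmax x0) by (apply psi_root; auto; fold T0; lra).
  assert (Hg0d : 0 < g0d P kmax x0) by (apply g0d_pos; auto).
  assert (HKd : forall z, 0 <= z -> c0 <= Kd P kmax z) by (intros; apply Kd_lb; auto).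
  assert (HKd0 : 0 < Kd P kmax x0) by (assert (c0 <= Kd P kmax x0) by (apply HKd; lra); lra).
  set (A := (T1 - T2) / T0).
  assert (HA : 0 < A) by (apply Rdiv_lt_0_compat; lra).
  exists (g0d P kmax x0 * / T0 * / Kd P kmax x0 * A). split.
  2:{ apply Rmult_lt_0_compat; auto. apply Rmult_lt_0_compat; [apply Rmult_lt_0_compat|];
      auto; apply Rinv_0_lt_compat; lra. }
  intros eps Heps.
  set (eps' := eps / A).
  assert (Heps' : 0 < eps') by (apply Rdiv_lt_0_compat; lra).
  destruct (mult_close (g0d P kmax x0 * / T0) (/ Kd P kmax x0) eps' Heps') as [e1 [e2 [He1 [He2 M1]]]].
  destruct (mult_close (g0d P kmax x0) (/ T0) e1 He1) as [e3 [e4 [He3 [He4 M2]]]].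
  destruct (cont_eps _ _ (g0d_cont P kmax x0) e3 He3) as [dg [Hdg Cg]].
  assert (CK : continuity_pt (/ Kd P kmax)%F x0) by (apply continuity_pt_inv; [apply Kd_cont| lra]).
  destruct (cont_eps _ _ CK e2 He2) as [dk [Hdk Ck]].
  set (ex := Rmin (Rmin dg dk) (Rmin (x0 / 2) ((1 - x0) / 2))).
  assert (Hex : 0 < ex) by (unfold ex; repeat apply Rmin_pos; lra).
  assert (Hex1 : ex <= dg) by (unfold ex; eapply Rle_trans; [apply Rmin_l| apply Rmin_l]).
  assert (Hex2 : ex <= dk) by (unfold ex; eapply Rle_trans; [apply Rmin_l| apply Rmin_r]).
  assert (Hex3 : ex <= x0 / 2) by (unfold ex; eapply Rle_trans; [apply Rmin_r| apply Rmin_l]).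
  assert (Hex4 : ex <= (1 - x0) / 2) by (unfold ex; eapply Rle_trans; [apply Rmin_r| apply Rmin_r]).
  set (e := ex / 2).
  assert (Hc0 : 0 < c0) by exact HQ.
  set (dr := c0 * e * T0 * T2 / (T1 - T2)).
  set (dT := e4 * T0 * T2 / (T1 - T2)).
  assert (Hdr : 0 < dr) by (unfold dr; apply Rdiv_lt_0_compat; [|lra]; assert (0 < e) by (unfold e; lra); assert (0 < c0 * e) by (apply Rmult_lt_0_compat; lra); assert (0 < c0 * e * T0) by (apply Rmult_lt_0_compat; lra); apply Rmult_lt_0_compat; lra).
  assert (HdT : 0 < dT) by (unfold dT; apply Rdiv_lt_0_compat; [repeat apply Rmult_lt_0_compat|]; lra).
  exists (Rmin dr dT). split; [apply Rmin_pos; auto|].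
  intros h Hh0 Hh Hqh.
  assert (Hhr : Rabs h < dr) by (eapply Rlt_le_trans; [exact Hh| apply Rmin_l]).
  assert (HhT : Rabs h < dT) by (eapply Rlt_le_trans; [exact Hh| apply Rmin_r]).
  destruct (root_cont P kmax T1 T2 q0 x0 m0 e HP Hm HT HT1 Hq Hm2 Hmk HQ
              ltac:(unfold e; lra) ltac:(unfold e; lra) HK0 h Hqh Hhr) as [z [Hz HKz1]].
  assert (Hb := Tq_bounds T1 T2 _ HT Hqh). set (T' := Tq T1 T2 (q0 + h)) in *.
  assert (Hpsiz : psi P kmax T1 T2 (q0 + h) = g0 P kmax z)
    by (apply psi_root; auto; [fold T'; lra| unfold e in Hz; lra]).
  rewrite Hpsiz, Hpsi0.
  destruct (mvt_any (K P kmax) (Kd P kmax) x0 z (K_der P kmax)) as [xi [Hxi Exi]].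
  destruct (mvt_any (g0 P kmax) (g0d P kmax) x0 z (g0_der P kmax)) as [eta [Heta Eeta]].
  assert (Hxi0 : c0 <= Kd P kmax xi) by (apply HKd; unfold e in Hz; lra).
  assert (HKz : K P kmax z = / T') by (fold T' in HKz1; field_simplify_eq; lra).
  assert (ET : T0 - T' = (T1 - T2) * h) by (unfold T0, T', Tq; ring).
  assert (Equot : (g0 P kmax z - g0 P kmax x0) / h =
                  (g0d P kmax eta * / T' * / Kd P kmax xi) * A).
  { rewrite Eeta. rewrite HKz, HKx in Exi.
    assert (Ez : z - x0 = (/ T' - / T0) / Kd P kmax xi) by (rewrite Exi; field; apply Rgt_not_eq; apply Rlt_le_trans with c0; assumption).
    rewrite Ez. unfold A. replace (/ T' - / T0) with ((T0 - T') / (T0 * T')) by (field; lra).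
    rewrite ET. field. split; [apply Rgt_not_eq; lra|].
    split; [apply Rgt_not_eq; apply Rlt_le_trans with c0; assumption|].
    split; [apply Rgt_not_eq; lra| exact Hh0]. }
  rewrite Equot. clear Equot Exi Eeta HKz HKz1 Hpsiz Hpsi0 CK HK0 HKx ET.
  replace (g0d P kmax eta * / T' * / Kd P kmax xi * A - g0d P kmax x0 * / T0 * / Kd P kmax x0 * A)
    with ((g0d P kmax eta * / T' * / Kd P kmax xi - g0d P kmax x0 * / T0 * / Kd P kmax x0) * A) by ring.
  rewrite Rabs_mult, (Rabs_right A) by lra.
  replace eps with (eps' * A) by (unfold eps'; field; lra).
  apply Rmult_lt_compat_r; auto.
  assert (Hzx : Rabs (z - x0) <= e) by (apply Rabs_le; lra).
  apply M1.
  - apply M2.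
    + apply Cg. apply Rle_lt_trans with e; [|unfold e; lra].
      apply Rabs_le; destruct Heta; lra.
    + assert (Hc := invT_close T1 T2 q0 h HT Hq Hqh). fold T' T0 in Hc.
      apply Rle_lt_trans with ((T1 - T2) * Rabs h / (T0 * T2)); auto.
      apply Rmult_lt_reg_r with (T0 * T2 / (T1 - T2)).
      * apply Rdiv_lt_0_compat; [apply Rmult_lt_0_compat|]; lra.
      * replace ((T1 - T2) * Rabs h / (T0 * T2) * (T0 * T2 / (T1 - T2))) with (Rabs h)
          by (field; repeat split; apply Rgt_not_eq; lra).
        replace (e4 * (T0 * T2 / (T1 - T2))) with dT
          by (unfold dT; field; repeat split; apply Rgt_not_eq; lra). exact HhT.
  - assert (Hk := Ck xi). unfold inv_fct in Hk. apply Hk.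
    apply Rle_lt_trans with e; [|unfold e; lra].
    apply Rabs_le; destruct Hxi; lra.
Qed.


Theorem theorem2 (P : nat -> R) (kmax : nat) (T1 T2 : R) :
  is_degree_dist P kmax ->
  0 < mean_deg P kmax ->
  0 < T2 -> T2 < T1 -> T1 < 1 ->
  0 < sum_f_R0 (fun m => INR m * Qex P kmax m) kmax ->
  (forall q, 0 <= q <= 1 ->
     0 < psi P kmax T1 T2 q < 1 ->
     exists l, has_deriv01 (psi P kmax T1 T2) q l /\ 0 < l) /\
  (forall q, 0 <= q <= 1 ->
     exists l, has_deriv01 (nu_tilde P kmax T1 T2) q l /\ l < 0).
Proof.
  intros HP Hm HT2 HT12 HT1 HM. split.
  - intros q Hq [_ Hpsi]. apply part1; auto.
  - intros q Hq. set (M := sum_f_R0 (fun m => INR m * Qex P kmax m) kmax) in *.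
    exists ((T2 - T1) * M). split; [|nra].
    intros eps Heps. exists 1. split; [lra|]. intros h Hh _ _.
    rewrite !nu_eq by auto. fold M. unfold Tq.
    replace (((T1 + (T2 - T1) * (q + h)) * M - (T1 + (T2 - T1) * q) * M) / h - (T2 - T1) * M)
      with 0 by (field; auto).
    rewrite Rabs_R0. auto.
Qed.
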